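(* Let $\Lambda_0$ be the even shift over $\{0,1\}$ (the subshift with forbidden words $1\,0^{2n+1}\,1$, $n\in\mathbb Z_{\ge0}$) and $\Lambda_1$ the odd shift over $\{0,1\}$ (forbidden words $1\,0^{2n}\,1$, $n\in\mathbb Z_{\ge0}$). Then the one-sided subshifts $(X_{\Lambda_0},\sigma_{\Lambda_0})$ and $(X_{\Lambda_1},\sigma_{\Lambda_1})$ are continuously orbit equivalent.
   Context: Both are normal subshifts. Subshifts over finite alphabet $\Sigma$: $B_l(\Lambda)$, $B_*(\Lambda)$ admissible words; $X_\Lambda=\{(x_n)_{n\in\mathbb N}:(x_n)_{n\in\mathbb Z}\in\Lambda\}$ with shift $\sigma_\Lambda$. $\Gamma_l^-(\mu)=\{\nu\in B_l(\Lambda):\nu\mu\in B_*(\Lambda)\}$, $\Gamma_*^+(\mu)=\{\nu:\mu\nu\in B_*(\Lambda)\}$; $\mu$ is $l$-synchronizing if $\Gamma_l^-(\mu)=\Gamma_l^-(\mu\omega)$ for all $\omega\in\Gamma_*^+(\mu)$, $S_l(\Lambda)$ the set of these; $\mu\sim_l\nu$ iff $\Gamma_l^-(\mu)=\Gamma_l^-(\nu)$. The minimal presentation $\mathfrak L=\mathfrak L_\Lambda^{\min}$ of a normal $\Lambda$ has vertex sets $V_0$ a singleton and $V_l=S_l(\Lambda)/\!\sim_l$, one edge labeled $\alpha$ from $[\alpha\nu]_l$ to $[\nu]_{l+1}$ for each $\nu\in S_{l+1}(\Lambda)$, $\alpha\nu\in B_*(\Lambda)$, and maps $\iota([\nu]_{l+1})=[\nu]_l$.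 Let $\Omega_{\mathfrak L}=\{(u^l)_{l\ge0}\in\prod_lV_l:\iota(u^{l+1})=u^l\}$; $E_{\mathfrak L}$ the set of $(u,\alpha,w)\in\Omega_{\mathfrak L}\times\Sigma\times\Omega_{\mathfrak L}$ such that for each $l$ there is an edge from $u^l$ to $w^{l+1}$ labeled $\alpha$; $X_{\mathfrak L}=\{(\alpha_i,u_i)_{i\in\mathbb N}:\exists u_0,\ (u_{i-1},\alpha_i,u_i)\in E_{\mathfrak L}\ \forall i\ge1\}$ with product topology, shift $\sigma_{\mathfrak L}$ and factor map $\pi_{\mathfrak L}((\alpha_i,u_i)_i)=(\alpha_i)_i$. For normal $\Lambda_0,\Lambda_1$ with $\mathfrak L_i=\mathfrak L_{\Lambda_i}^{\min}$, $X_{\Lambda_0}$ and $X_{\Lambda_1}$ are continuously orbit equivalent if there exist homeomorphisms $h_{\mathfrak L}:X_{\mathfrak L_0}\to X_{\mathfrak L_1}$, $h_\Lambda:X_{\Lambda_0}\to X_{\Lambda_1}$ and continuous $k_i,l_i:X_{\mathfrak L_i}\to\mathbb Z_{\ge0}$ with $\pi_{\mathfrak L_1}\circ h_{\mathfrak L}=h_\Lambda\circ\pi_{\mathfrak L_0}$, $\sigma_{\mathfrak L_1}^{k_0(x)}(h_{\mathfrak L}(\sigma_{\mathfrak L_0}(x)))=\sigma_{\mathfrak L_1}^{l_0(x)}(h_{\mathfrak L}(x))$ and $\sigma_{\mathfrak L_0}^{k_1(y)}(h_{\mathfrak L}^{-1}(\sigma_{\mathfrak L_1}(y)))=\sigma_{\mathfrak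 L_0}^{l_1(y)}(h_{\mathfrak L}^{-1}(y))$ for all $x\in X_{\mathfrak L_0}$, $y\in X_{\mathfrak L_1}$. *)

(* Defs.v *)
From Stdlib Require Import ZArith List.
Import ListNotations.
Set Implicit Arguments.

Section Subshifts.
Variable Sigma : Type.

(* A two-sided subshift is given as a predicate on bi-infinite sequences. *)
Definition word := list Sigma.
Definition biseq := Z -> Sigma.

Definition occurs (w : word) (x : biseq) : Prop :=
  exists k : Z, forall i : nat, (i < length w)%nat ->
    nth_error w i = Some (x (k + Z.of_nat i)%Z).

Definition Badm (Lam : biseq -> Prop) (w : word) : Prop :=
  exists x, Lam x /\ occurs w x.

Definition Bl (Lam : biseq -> Prop) (l : nat) (w : word) : Prop :=
  Badm Lam w /\ length w = l.

Definition Gamma_minus (Lam : biseq -> Prop) (l : nat) (mu nu : word) : Prop :=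
  Bl Lam l nu /\ Badm Lam (nu ++ mu).

Definition Gamma_plus (Lam : biseq -> Prop) (mu nu : word) : Prop :=
  Badm Lam (mu ++ nu).

Definition sync (Lam : biseq -> Prop) (l : nat) (mu : word) : Prop :=
  Badm Lam mu /\
  forall omega, Gamma_plus Lam mu omega ->
    forall nu, Gamma_minus Lam l mu nu <-> Gamma_minus Lam l (mu ++ omega) nu.

Definition sim (Lam : biseq -> Prop) (l : nat) (mu nu : word) : Prop :=
  forall w, Gamma_minus Lam l mu w <-> Gamma_minus Lam l nu w.

Definition cls (Lam : biseq -> Prop) (l : nat) (nu : word) : word -> Prop :=
  fun mu => sync Lam l mu /\ sim Lam l mu nu.

Definition vertex (Lam : biseq -> Prop) (l : nat) (v : word -> Prop) : Prop :=
  exists nu, sync Lam l nu /\ v = cls Lam l nu.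

Definition edge (Lam : biseq -> Prop) (l : nat) (v : word -> Prop) (a : Sigma)
  (w : word -> Prop) : Prop :=
  exists nu, sync Lam (S l) nu /\ Badm Lam (a :: nu) /\
    v = cls Lam l (a :: nu) /\ w = cls Lam (S l) nu.

(* Omega_L: sequences (u^l)_l with u^l in V_l and iota(u^{l+1}) = u^l,
   where iota([nu]_{l+1}) = [nu]_l. *)
Definition Omega (Lam : biseq -> Prop) (u : nat -> (word -> Prop)) : Prop :=
  (forall l, vertex Lam l (u l)) /\
  forall l, exists nu, sync Lam (S l) nu /\ u (S l) = cls Lam (S l) nu /\
                       u l = cls Lam l nu.

Definition EL (Lam : biseq -> Prop) (u : nat -> (word -> Prop)) (a : Sigma)
  (w : nat -> (word -> Prop)) : Prop :=
  Omega Lam u /\ Omega Lam w /\ forall l, edge Lam l (u l) a (w (S l)).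

(* Points of X_L: sequences indexed by nat; our index i corresponds to the
   paper's index i+1 (the paper's u_0 is existentially quantified). *)
Definition Lpoint := nat -> (Sigma * (nat -> (word -> Prop))).

Definition XL (Lam : biseq -> Prop) (x : Lpoint) : Prop :=
  exists u0, EL Lam u0 (fst (x O)) (snd (x O)) /\
  forall i, EL Lam (snd (x i)) (fst (x (S i))) (snd (x (S i))).

Definition XLam (Lam : biseq -> Prop) (x : nat -> Sigma) : Prop :=
  exists y, Lam y /\ forall n : nat, y (Z.of_nat n) = x n.

Definition piL (x : Lpoint) : nat -> Sigma := fun n => fst (x n).

Definition coordL (x : Lpoint) (c : nat * option nat) : Sigma + (word -> Prop) :=
  match snd c with
  | None => inl (fst (x (fst c)))
  | Some l => inr (snd (x (fst c)) l)
  end.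

Definition coordLam (x : nat -> Sigma) (n : nat) : Sigma := x n.

End Subshifts.

Definition shift {A : Type} (x : nat -> A) : nat -> A := fun n => x (S n).

Definition shiftk {A : Type} (k : nat) (x : nat -> A) : nat -> A :=
  Nat.iter k (@shift A) x.

Definition coordNat (k : nat) (_ : unit) : nat := k.

(* Continuity of f : S -> Q for the initial (product) topologies making
   all coordinate maps cP _ c, cQ _ c' continuous into discrete spaces;
   S carries the subspace topology. *)
Definition continuous_on {P Q CP CQ DP DQ : Type}
  (cP : P -> CP -> DP) (cQ : Q -> CQ -> DQ) (S : P -> Prop) (f : P -> Q) : Prop :=
  forall x, S x -> forall c : CQ, exists L : list CP,
    forall y, S y -> (forall d, In d L -> cP y d = cP x d) ->
      cQ (f y) c = cQ (f x) c.

Definition homeo {P Q CP CQ DP DQ : Type}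
  (cP : P -> CP -> DP) (cQ : Q -> CQ -> DQ) (S : P -> Prop) (T : Q -> Prop)
  (f : P -> Q) (g : Q -> P) : Prop :=
  (forall x, S x -> T (f x)) /\ (forall y, T y -> S (g y)) /\
  (forall x, S x -> g (f x) = x) /\ (forall y, T y -> f (g y) = y) /\
  continuous_on cP cQ S f /\ continuous_on cQ cP T g.

(* Continuous orbit equivalence of X_{Lambda0}, X_{Lambda1} (via the minimal
   presentations), as in the paper. *)
Definition coe {S0 S1 : Type} (Lam0 : biseq S0 -> Prop) (Lam1 : biseq S1 -> Prop)
  : Prop :=
  exists (hL : Lpoint S0 -> Lpoint S1) (hLinv : Lpoint S1 -> Lpoint S0)
         (hLam : (nat -> S0) -> (nat -> S1)) (hLaminv : (nat -> S1) -> (nat -> S0))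
         (k0 l0 : Lpoint S0 -> nat) (k1 l1 : Lpoint S1 -> nat),
    homeo (@coordL S0) (@coordL S1) (XL Lam0) (XL Lam1) hL hLinv /\
    homeo (@coordLam S0) (@coordLam S1) (XLam Lam0) (XLam Lam1) hLam hLaminv /\
    continuous_on (@coordL S0) coordNat (XL Lam0) k0 /\
    continuous_on (@coordL S0) coordNat (XL Lam0) l0 /\
    continuous_on (@coordL S1) coordNat (XL Lam1) k1 /\
    continuous_on (@coordL S1) coordNat (XL Lam1) l1 /\
    (forall x, XL Lam0 x -> piL (hL x) = hLam (piL x)) /\
    (forall x, XL Lam0 x ->
       shiftk (k0 x) (hL (shift x)) = shiftk (l0 x) (hL x)) /\
    (forall y, XL Lam1 y ->
       shiftk (k1 y) (hLinv (shift y)) = shiftk (l1 y) (hLinv y)).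

(* Alphabet {0,1} encoded as bool, with 1 = true, 0 = false. *)
Definition even_shift (x : biseq bool) : Prop :=
  forall n : nat, ~ occurs (true :: repeat false (2 * n + 1) ++ [true]) x.

Definition odd_shift (x : biseq bool) : Prop :=
  forall n : nat, ~ occurs (true :: repeat false (2 * n) ++ [true]) x.

(* Main.v *)
Require Import Defs.
From Stdlib Require Import ZArith List Lia Bool Arith.
From Stdlib Require Import ClassicalEpsilon FunctionalExtensionality PropExtensionality.
Import ListNotations.
Set Implicit Arguments.

Definition pat (y : Z -> bool) (k : Z) (m : nat) : Prop :=
  y k = true /\ y (k + Z.of_nat m + 1)%Z = true /\
  forall j : nat, (1 <= j <= m)%nat -> y (k + Z.of_nat j)%Z = false.

Definition LamG (good : nat -> bool) (y : Z -> bool) : Prop :=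
  forall k m, good m = false -> ~ pat y k m.

Lemma nth_error_pw : forall m i, nth_error (true :: repeat false m ++ [true]) i =
  if i =? 0 then Some true else if i <=? m then Some false else if i =? S m then Some true else None.
Proof.
  intros m i. destruct i as [|i]; [reflexivity|].
  cbn [nth_error].
  destruct (Nat.ltb_spec i m).
  - rewrite nth_error_app1 by (rewrite repeat_length; lia).
    rewrite nth_error_repeat by lia.
    replace (S i =? 0) with false by reflexivity.
    replace (S i <=? m) with true by (symmetry; apply Nat.leb_le; lia). reflexivity.
  - rewrite nth_error_app2 by (rewrite repeat_length; lia).
    rewrite repeat_length.
    replace (S i =? 0) with false by reflexivity.
    replace (S i <=? m) with false by (symmetry; apply Nat.leb_gt; lia).
    destruct (Nat.eqb_spec i m).
    + subst. rewrite Nat.sub_diag. rewrite Nat.eqb_refl. reflexivity.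
    + replace (S i =? S m) with false by (symmetry; apply Nat.eqb_neq; lia).
      destruct (i - m) eqn:E; [lia|]. destruct n0; reflexivity.
Qed.

Lemma occurs_pat : forall m y,
  occurs (true :: repeat false m ++ [true]) y <-> exists k, pat y k m.
Proof.
  intros m y. split.
  - intros [k H]. exists k.
    assert (Hl : length (true :: repeat false m ++ [true]) = S (S m)).
    { simpl. rewrite length_app, repeat_length. simpl. lia. }
    rewrite Hl in H. split; [|split].
    + specialize (H 0%nat ltac:(lia)). rewrite nth_error_pw in H. simpl in H.
      rewrite Z.add_0_r in H. congruence.
    + specialize (H (S m) ltac:(lia)). rewrite nth_error_pw in H.
      replace (S m =? 0) with false in H by reflexivity.
      replace (S m <=? m) with false in H by (symmetry; apply Nat.leb_gt; lia).
      rewrite Nat.eqb_refl in H.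
      replace (k + Z.of_nat m + 1)%Z with (k + Z.of_nat (S m))%Z by lia. congruence.
    + intros j Hj. specialize (H j ltac:(lia)). rewrite nth_error_pw in H.
      replace (j =? 0) with false in H by (symmetry; apply Nat.eqb_neq; lia).
      replace (j <=? m) with true in H by (symmetry; apply Nat.leb_le; lia). congruence.
  - intros [k [h1 [h2 h3]]]. exists k. intros i Hi.
    simpl in Hi. rewrite length_app, repeat_length in Hi. simpl in Hi.
    rewrite nth_error_pw.
    destruct (Nat.eqb_spec i 0). { subst. rewrite Z.add_0_r. congruence. }
    destruct (Nat.leb_spec i m). { rewrite h3 by lia. reflexivity. }
    replace (i =? S m) with true by (symmetry; apply Nat.eqb_eq; lia).
    replace (k + Z.of_nat i)%Z with (k + Z.of_nat m + 1)%Z by lia. congruence.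
Qed.

Lemma occurs_app_l : forall (S : Type) (u v : list S) x, occurs (u ++ v) x -> occurs u x.
Proof.
  intros S u v x [k H]. exists k. intros i Hi.
  rewrite <- (nth_error_app1 u v Hi). apply H. rewrite length_app. lia.
Qed.

Lemma occurs_app_r : forall (S : Type) (u v : list S) x, occurs (u ++ v) x -> occurs v x.
Proof.
  intros S u v x [k H]. exists (k + Z.of_nat (length u))%Z. intros i Hi.
  specialize (H (length u + i)%nat ltac:(rewrite length_app; lia)).
  rewrite nth_error_app2 in H by lia.
  replace (length u + i - length u)%nat with i in H by lia.
  rewrite H. f_equal. f_equal. lia.
Qed.

Lemma Badm_app_l : forall (S : Type) (L : biseq S -> Prop) u v, Badm L (u ++ v) -> Badm L u.
Proof. intros S L u v [x [H1 H2]]. exists x. split; auto. eapply occurs_app_l; eauto. Qed.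

Lemma Badm_app_r : forall (S : Type) (L : biseq S -> Prop) u v, Badm L (u ++ v) -> Badm L v.
Proof. intros S L u v [x [H1 H2]]. exists x. split; auto. eapply occurs_app_r; eauto. Qed.

Definition ext (w : list bool) : Z -> bool :=
  fun z => if (z <? 0)%Z then false else nth (Z.to_nat z) w false.

Lemma occurs_ext : forall w, occurs w (ext w).
Proof.
  intros w. exists 0%Z. intros i Hi.
  rewrite nth_error_nth' with (d := false) by auto. unfold ext.
  rewrite Z.add_0_l. destruct (Z.ltb_spec (Z.of_nat i) 0); [lia|].
  rewrite Nat2Z.id. reflexivity.
Qed.

Lemma ext_true : forall w z, ext w z = true -> (0 <= z)%Z /\ nth (Z.to_nat z) w false = true.
Proof.
  intros w z. unfold ext. destruct (Z.ltb_spec z 0); [discriminate|]. auto.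
Qed.

Lemma nth_one : forall a c i, nth i (repeat false a ++ true :: repeat false c) false = true -> i = a.
Proof.
  intros a c i H. destruct (Nat.ltb_spec i a).
  - rewrite app_nth1 in H by (rewrite repeat_length; lia). rewrite nth_repeat in H. discriminate.
  - rewrite app_nth2 in H by (rewrite repeat_length; lia). rewrite repeat_length in H.
    destruct (i - a) eqn:E; [lia|]. simpl in H. rewrite nth_repeat in H. discriminate.
Qed.

Lemma nth_two : forall m i, nth i (true :: repeat false m ++ [true]) false = true -> i = 0%nat \/ i = S m.
Proof.
  intros m i H. destruct i as [|i]; [auto|]. simpl in H. right.
  destruct (Nat.ltb_spec i m).
  - rewrite app_nth1 in H by (rewrite repeat_length; lia). rewrite nth_repeat in H. discriminate.
  - rewrite app_nth2 in H by (rewrite repeat_length; lia). rewrite repeat_length in H.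
    destruct (i - m) eqn:E; [lia|]. destruct n; discriminate.
Qed.

Lemma noone : forall w : list bool, ~ In true w -> w = repeat false (length w).
Proof.
  induction w as [|a w IH]; intros H; auto. simpl in *.
  destruct a. { exfalso; auto. } f_equal. apply IH. auto.
Qed.

Lemma lastone : forall w : list bool, In true w -> exists p t, w = p ++ true :: repeat false t.
Proof.
  induction w as [|a w IH]; intros H; [destruct H|].
  destruct (in_dec bool_dec true w) as [Hi|Hi].
  - destruct (IH Hi) as [p [t ->]]. exists (a :: p), t. reflexivity.
  - simpl in H. destruct H as [<-|H]; [|contradiction].
    exists [], (length w). simpl. f_equal. apply noone; auto.
Qed.

Lemma firstone : forall w : list bool, In true w -> exists j r, w = repeat false j ++ true :: r.
Proof.
  induction w as [|a w IH]; intros H; [destruct H|].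
  destruct a. { exists 0%nat, w. reflexivity. }
  simpl in H. destruct H as [H|H]; [discriminate|].
  destruct (IH H) as [j [r ->]]. exists (S j), r. reflexivity.
Qed.

Lemma uniqT : forall l p t, repeat false l ++ [true] = p ++ true :: repeat false t -> t = 0%nat.
Proof.
  intros l p t H. destruct t as [|t]; auto. exfalso.
  apply (f_equal (fun w => last w false)) in H. rewrite last_last in H.
  replace (p ++ true :: repeat false (S t)) with ((p ++ true :: repeat false t) ++ [false]) in H.
  - rewrite last_last in H. discriminate.
  - rewrite <- app_assoc. simpl. f_equal. f_equal.
    clear. induction t; simpl; congruence.
Qed.

Lemma cls_eq : forall (S : Type) (L : biseq S -> Prop) l a b, sim L l a b -> cls L l a = cls L l b.
Proof.
  intros S L l a b H. apply functional_extensionality. intros mu.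
  apply propositional_extensionality. unfold cls, sim in *. split; intros [Hs Hm]; split; auto;
  intros w; rewrite Hm; [apply H|symmetry; apply H].
Qed.

Lemma cls_sim : forall (S : Type) (L : biseq S -> Prop) l a b, sync L l a -> cls L l a = cls L l b -> sim L l a b.
Proof.
  intros S L l a b Hs H. assert (Ha : cls L l a a) by (split; auto; intro; reflexivity).
  rewrite H in Ha. apply Ha.
Qed.

Section W.
Variable good : nat -> bool.
Hypothesis Hg : forall m, good (S m) = negb (good m).

Definition adm (w : list bool) := Badm (LamG good) w.

Lemma adm_one : forall a c, adm (repeat false a ++ true :: repeat false c).
Proof.
  intros a c. exists (ext (repeat false a ++ true :: repeat false c)). split; [|apply occurs_ext].
  intros k m _ [h1 [h2 _]].
  apply ext_true in h1. apply ext_true in h2. destruct h1 as [h1 h1']. destruct h2 as [h2 h2'].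
  apply nth_one in h1'. apply nth_one in h2'. lia.
Qed.

Lemma adm_two : forall m, good m = true -> adm (true :: repeat false m ++ [true]).
Proof.
  intros m Hm. exists (ext (true :: repeat false m ++ [true])). split; [|apply occurs_ext].
  intros k m' Hm' [h1 [h2 _]].
  apply ext_true in h1. apply ext_true in h2. destruct h1 as [h1 h1']. destruct h2 as [h2 h2'].
  apply nth_two in h1'. apply nth_two in h2'.
  assert (m' = m) by lia. subst. congruence.
Qed.

Lemma two_adm : forall m, adm (true :: repeat false m ++ [true]) -> good m = true.
Proof.
  intros m [x [Hx Ho]]. destruct (good m) eqn:E; auto.
  apply occurs_pat in Ho. destruct Ho as [k Hk]. exfalso. exact (Hx k m E Hk).
Qed.

Lemma glue : forall u v, adm (u ++ [true]) -> adm (true :: v) -> adm (u ++ true :: v).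
Proof.
  intros u v [x [Hx [k1 Ox]]] [y [Hy [k2 Oy]]].
  set (P := (k1 + Z.of_nat (length u))%Z).
  assert (xP : x P = true).
  { specialize (Ox (length u) ltac:(rewrite length_app; simpl; lia)).
    rewrite nth_error_app2 in Ox by lia. rewrite Nat.sub_diag in Ox. simpl in Ox. unfold P. congruence. }
  assert (yk : y k2 = true).
  { specialize (Oy 0%nat ltac:(simpl; lia)). simpl in Oy. rewrite Z.add_0_r in Oy. congruence. }
  set (z := fun m => if (m <=? P)%Z then x m else y (m - P + k2)%Z).
  assert (zL : forall m, (m <= P)%Z -> z m = x m).
  { intros m Hm. unfold z. destruct (Z.leb_spec m P); [reflexivity|lia]. }
  assert (zR : forall m, (P <= m)%Z -> z m = y (m - P + k2)%Z).
  { intros m Hm. unfold z. destruct (Z.leb_spec m P); [|reflexivity].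
    assert (m = P) by lia. subst m. rewrite xP. replace (P - P + k2)%Z with k2 by lia. auto. }
  exists z. split.
  - intros k m Hm [h1 [h2 h3]].
    destruct (Z_le_gt_dec (k + Z.of_nat m + 1) P).
    + apply (Hx k m Hm). split; [|split].
      * rewrite <- zL by lia. auto.
      * rewrite <- zL by lia. auto.
      * intros j Hj. rewrite <- zL by lia. auto.
    + destruct (Z_le_gt_dec P k).
      * apply (Hy (k - P + k2)%Z m Hm). split; [|split].
        -- rewrite <- zR by lia. auto.
        -- rewrite zR in h2 by lia. rewrite <- h2. f_equal. lia.
        -- intros j Hj. specialize (h3 j Hj). rewrite zR in h3 by lia. rewrite <- h3. f_equal. lia.
      * specialize (h3 (Z.to_nat (P - k)) ltac:(lia)).
        rewrite Z2Nat.id in h3 by lia. replace (k + (P - k))%Z with P in h3 by lia.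
        rewrite zL in h3 by lia. congruence.
  - exists k1. intros i Hi. rewrite length_app in Hi. simpl in Hi.
    destruct (Nat.ltb_spec i (length u)).
    + rewrite nth_error_app1 by auto. rewrite zL by lia.
      specialize (Ox i ltac:(rewrite length_app; simpl; lia)).
      rewrite nth_error_app1 in Ox by auto. auto.
    + rewrite nth_error_app2 by auto. rewrite zR by lia.
      specialize (Oy (i - length u)%nat ltac:(simpl; lia)). rewrite Oy. f_equal. f_equal. lia.
Qed.


Lemma goodx : forall n, good n = xorb (good 0) (Nat.odd n).
Proof.
  induction n. { simpl. destruct (good 0); reflexivity. }
  rewrite Hg, IHn, Nat.odd_succ, <- Nat.negb_even.
  destruct (good 0), (Nat.even n); reflexivity.
Qed.

Lemma good_add : forall t j, good (t + j) = xorb (xorb (good t) (good 0)) (good j).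
Proof.
  intros t j. rewrite (goodx (t+j)), (goodx t), (goodx j), Nat.odd_add.
  destruct (good 0), (Nat.odd t), (Nat.odd j); reflexivity.
Qed.

Definition Gset (l j : nat) (w : list bool) : Prop :=
  Bl (LamG good) l w /\ forall p t, w = p ++ true :: repeat false t -> good (t + j) = true.

Lemma eq_shape : forall p t j,
  (p ++ true :: repeat false t) ++ repeat false j ++ [true] = p ++ true :: repeat false (t + j) ++ [true].
Proof.
  intros. rewrite repeat_app, <- app_assoc. simpl. rewrite <- app_assoc. reflexivity.
Qed.

Lemma Lj : forall w j, adm (w ++ repeat false j ++ [true]) <->
  adm w /\ (forall p t, w = p ++ true :: repeat false t -> good (t + j) = true).
Proof.
  intros w j. split.
  - intros H. split. { eapply Badm_app_l; eauto. }
    intros p t ->. apply two_adm. rewrite eq_shape in H. eapply Badm_app_r; eauto.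
  - intros [Hw Hc]. destruct (in_dec bool_dec true w) as [Hi|Hi].
    + destruct (@lastone _ Hi) as [p [t ->]]. specialize (Hc p t eq_refl).
      rewrite eq_shape. apply glue.
      * apply Badm_app_l with (v := repeat false t). rewrite <- app_assoc. exact Hw.
      * apply adm_two. auto.
    + rewrite (@noone _ Hi). rewrite app_assoc, <- repeat_app. apply (adm_one _ 0).
Qed.

Lemma Gr : forall j r w, adm (repeat false j ++ true :: r) ->
  (adm (w ++ repeat false j ++ true :: r) <-> adm (w ++ repeat false j ++ [true])).
Proof.
  intros j r w Ha. split.
  - intros H. apply Badm_app_l with (v := r). rewrite <- !app_assoc. exact H.
  - intros H. rewrite app_assoc. apply glue.
    + rewrite <- app_assoc. exact H.
    + eapply Badm_app_r; eauto.
Qed.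

Lemma Gm_char : forall j r, adm (repeat false j ++ true :: r) ->
  forall l w, Gamma_minus (LamG good) l (repeat false j ++ true :: r) w <-> Gset l j w.
Proof.
  intros j r Ha l w. unfold Gamma_minus, Gset. split.
  - intros [Hb H]. split; auto. apply (Gr j r w Ha) in H. apply Lj in H. apply H.
  - intros [Hb H]. split; auto. apply (Gr j r w Ha). apply Lj. split; auto. apply Hb.
Qed.

Lemma Gset_par : forall l j j' w, good j = good j' -> (Gset l j w <-> Gset l j' w).
Proof.
  intros l j j' w E. unfold Gset. split; intros [Hb H]; split; auto; intros p t Hp;
  specialize (H p t Hp); rewrite good_add in *; congruence.
Qed.

Lemma sim_gen : forall l j r j' r', adm (repeat false j ++ true :: r) ->
  adm (repeat false j' ++ true :: r') -> good j = good j' ->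
  sim (LamG good) l (repeat false j ++ true :: r) (repeat false j' ++ true :: r').
Proof.
  intros l j r j' r' H1 H2 E w. rewrite (Gm_char _ _ H1), (Gm_char _ _ H2). apply Gset_par; auto.
Qed.

Lemma Gset_T : forall l j, Gset (S l) j (repeat false l ++ [true]) <-> good j = true.
Proof.
  intros l j. split.
  - intros [_ H]. apply (H (repeat false l) 0%nat eq_refl).
  - intros H. split.
    + split. { apply (adm_one l 0). } rewrite length_app, repeat_length. simpl. lia.
    + intros p t Hp. apply uniqT in Hp. subst. exact H.
Qed.

Lemma sim_test : forall l j r j' r', adm (repeat false j ++ true :: r) ->
  adm (repeat false j' ++ true :: r') ->
  sim (LamG good) (S l) (repeat false j ++ true :: r) (repeat false j' ++ true :: r') ->
  good j = good j'.
Proof.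
  intros l j r j' r' H1 H2 Hs. specialize (Hs (repeat false l ++ [true])).
  rewrite (Gm_char _ _ H1), (Gm_char _ _ H2), !Gset_T in Hs.
  destruct (good j), (good j'); auto; destruct Hs as [A B]; [discriminate (A eq_refl)|discriminate (B eq_refl)].
Qed.

Lemma sync_one : forall l j r, adm (repeat false j ++ true :: r) ->
  sync (LamG good) l (repeat false j ++ true :: r).
Proof.
  intros l j r Ha. split; auto. intros omega Hom nu.
  unfold Gamma_plus in Hom. rewrite <- app_assoc in Hom |- *. simpl in Hom |- *.
  rewrite (Gm_char _ _ Ha), (Gm_char _ _ Hom). reflexivity.
Qed.

Lemma nosync_zero : forall l k, ~ sync (LamG good) (S l) (repeat false k).
Proof.
  intros l k [Ha Hs].
  set (e := if good k then 1%nat else 0%nat).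
  assert (He : good (k + e) = false).
  { unfold e. destruct (good k) eqn:E.
    - rewrite Nat.add_1_r, Hg, E. reflexivity.
    - rewrite Nat.add_0_r. exact E. }
  assert (Hom : Gamma_plus (LamG good) (repeat false k) (repeat false e ++ [true])).
  { unfold Gamma_plus. rewrite app_assoc, <- repeat_app. apply (adm_one _ 0). }
  specialize (Hs _ Hom (repeat false l ++ [true])).
  assert (Hl : Gamma_minus (LamG good) (S l) (repeat false k) (repeat false l ++ [true])).
  { split. { split. { apply (adm_one l 0). } rewrite length_app, repeat_length. simpl. lia. }
    rewrite <- app_assoc. simpl. apply adm_one. }
  apply Hs in Hl. destruct Hl as [_ Hl].
  rewrite (app_assoc (repeat false k)), <- repeat_app in Hl. apply Lj in Hl. destruct Hl as [_ Hl].
  specialize (Hl (repeat false l) 0%nat eq_refl). simpl in Hl. congruence.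
Qed.

Lemma sync_form : forall l nu, sync (LamG good) (S l) nu ->
  exists j r, nu = repeat false j ++ true :: r /\ adm (repeat false j ++ true :: r).
Proof.
  intros l nu Hs. destruct (in_dec bool_dec true nu) as [Hi|Hi].
  - destruct (@firstone _ Hi) as [j [r ->]]. exists j, r. split; auto. apply Hs.
  - exfalso. rewrite (@noone _ Hi) in Hs. eapply nosync_zero; eauto.
Qed.

Definition jb (b : bool) : nat := if Bool.eqb b (good 0) then 0%nat else 1%nat.
Lemma good_jb : forall b, good (jb b) = b.
Proof. intros b. unfold jb. pose proof (Hg 0) as H1. destruct (good 0) eqn:E; destruct b; simpl; try rewrite H1; rewrite ?E; reflexivity. Qed.
Definition wd (b : bool) : list bool := repeat false (jb b) ++ [true].
Lemma adm_wd : forall b, adm (wd b).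
Proof. intros b. apply (adm_one _ 0). Qed.
Definition V (b : bool) : nat -> (list bool -> Prop) := fun l => cls (LamG good) l (wd b).

Lemma V_inj : forall l b b', V b (S l) = V b' (S l) -> b = b'.
Proof.
  intros l b b' H. unfold V in H. apply cls_sim in H; [|apply sync_one, adm_wd].
  apply sim_test in H; try apply adm_wd. rewrite !good_jb in H. auto.
Qed.

Lemma V_of : forall l j r, adm (repeat false j ++ true :: r) ->
  cls (LamG good) l (repeat false j ++ true :: r) = V (good j) l.
Proof.
  intros l j r Ha. unfold V. apply cls_eq. apply sim_gen; auto. apply adm_wd.
  rewrite good_jb. auto.
Qed.

Lemma Omega_V : forall b, Omega (LamG good) (V b).
Proof.
  intros b. split.
  - intros l. exists (wd b). split; auto. apply sync_one, adm_wd.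
  - intros l. exists (wd b). split; auto. apply sync_one, adm_wd.
Qed.

Lemma Omega_inv : forall u, Omega (LamG good) u -> exists b, u = V b.
Proof.
  intros u [_ H2].
  assert (C : forall l, exists b, u l = V b l /\ u (S l) = V b (S l)).
  { intros l. destruct (H2 l) as [nu [Hs [E1 E2]]].
    destruct (sync_form Hs) as [j [r [-> Ha]]]. exists (good j).
    rewrite E1, E2, !V_of by auto. auto. }
  destruct (C 0%nat) as [b0 [E0 E1]]. exists b0.
  assert (D : forall l, u (S l) = V b0 (S l)).
  { induction l; auto. destruct (C (S l)) as [b [F1 F2]].
    rewrite IHl in F1. apply V_inj in F1. subst. auto. }
  apply functional_extensionality. intros [|l]; auto.
Qed.

Definition step (b : bool) (ab : bool * bool) : Prop :=
  if fst ab then b = good 0 /\ snd ab = true else b = negb (snd ab).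

Lemma EL_V : forall b a b', EL (LamG good) (V b) a (V b') <-> step b (a, b').
Proof.
  intros b a b'. split.
  - intros [_ [_ He]]. specialize (He 1%nat). destruct He as [nu [Hs [Ha [Hv Hw]]]].
    destruct (sync_form Hs) as [j [r [-> Hn]]].
    rewrite V_of in Hw by auto. apply V_inj in Hw. subst b'.
    destruct a; simpl.
    + change (true :: repeat false j ++ true :: r) with (repeat false 0 ++ true :: (repeat false j ++ true :: r)) in Hv, Ha.
      rewrite V_of in Hv by auto. apply V_inj in Hv. split; auto.
      apply two_adm. apply Badm_app_l with (v := r). simpl in Ha |- *.
      rewrite <- app_assoc. exact Ha.
    + change (false :: repeat false j ++ true :: r) with (repeat false (S j) ++ true :: r) in Hv, Ha.
      rewrite V_of in Hv by auto. apply V_inj in Hv. rewrite Hv, Hg. reflexivity.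
  - intros Hst. split; [apply Omega_V|split; [apply Omega_V|]]. intros l.
    unfold step in Hst; destruct a; simpl in Hst.
    + destruct Hst as [-> ->]. exists (wd true). split; [apply sync_one, adm_wd|].
      assert (Ht : adm (true :: wd true)).
      { apply adm_two. apply good_jb. }
      split; auto. split; auto.
      unfold V. apply cls_eq. unfold wd.
      change (true :: repeat false (jb true) ++ [true]) with
        (repeat false 0 ++ true :: (repeat false (jb true) ++ [true])).
      apply sim_gen. apply adm_wd. exact Ht. rewrite good_jb. auto.
    + subst b. exists (wd b'). split; [apply sync_one, adm_wd|].
      assert (Ht : adm (false :: wd b')) by apply (adm_one (S (jb b')) 0).
      split; auto. split; auto.
      unfold V. apply cls_eq. unfold wd.
      change (false :: repeat false (jb b') ++ [true]) with
        (repeat false (S (jb b')) ++ [true]).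
      apply sim_gen. apply adm_wd. exact Ht. rewrite Hg, !good_jb. auto.
Qed.


Definition emb (p : nat -> bool * bool) : Lpoint bool := fun i => (fst (p i), V (snd (p i))).
Definition dsb (x : Lpoint bool) (i : nat) : bool :=
  if excluded_middle_informative (snd (x i) 1%nat = V true 1%nat) then true else false.
Definition dec (x : Lpoint bool) : nat -> bool * bool := fun i => (fst (x i), dsb x i).
Definition valid (p : nat -> bool * bool) : Prop :=
  (exists b0, step b0 (p 0%nat)) /\ forall i, step (snd (p i)) (p (S i)).

Lemma V_ne : V true 1%nat <> V false 1%nat.
Proof. intros H. apply V_inj in H. discriminate. Qed.

Lemma dsb_V : forall b (x : Lpoint bool) i, snd (x i) = V b -> dsb x i = b.
Proof.
  intros b x i H. unfold dsb. rewrite H.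
  destruct excluded_middle_informative as [E|E]; destruct b; auto; exfalso; first [apply V_ne; symmetry; exact E|apply E; reflexivity|apply V_ne; exact E].
Qed.

Lemma XL_dec : forall x, XL (LamG good) x -> x = emb (dec x) /\ valid (dec x).
Proof.
  intros x [u0 [H0 Hi]].
  assert (Hs : forall i, snd (x i) = V (dsb x i)).
  { intros i. destruct (Hi i) as [Ho _]. destruct (Omega_inv Ho) as [b Hb].
    rewrite (dsb_V x i Hb). auto. }
  assert (Ex : x = emb (dec x)).
  { apply functional_extensionality. intros i. unfold emb, dec. simpl.
    rewrite <- Hs. apply surjective_pairing. }
  split; auto. split.
  - destruct (Omega_inv (proj1 H0)) as [b0 E0]. exists b0.
    apply (EL_V b0 (fst (x 0%nat)) (dsb x 0%nat)). rewrite <- E0, <- Hs. auto.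
  - intros i. specialize (Hi i). unfold dec at 1. simpl.
    apply (EL_V (dsb x i) (fst (x (S i))) (dsb x (S i))). rewrite <- !Hs. auto.
Qed.

Lemma valid_XL : forall p, valid p -> XL (LamG good) (emb p).
Proof.
  intros p [[b0 H0] Hi]. exists (V b0). split.
  - unfold emb. apply EL_V. simpl. rewrite <- surjective_pairing. auto.
  - intros i. unfold emb. apply EL_V. simpl. rewrite <- surjective_pairing. auto.
Qed.

Lemma dec_emb : forall p, dec (emb p) = p.
Proof.
  intros p. apply functional_extensionality. intros i. unfold dec.
  rewrite (dsb_V (b := snd (p i))) by reflexivity. simpl. symmetry. apply surjective_pairing.
Qed.

Definition OneS (x : nat -> bool) : Prop :=
  forall k m, good m = false -> ~ (x k = true /\ x (k + m + 1)%nat = true /\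
    forall j, (1 <= j <= m)%nat -> x (k + j)%nat = false).

Lemma XLam_iff : forall x, XLam (LamG good) x <-> OneS x.
Proof.
  intros x. split.
  - intros [y [Hy Hyx]] k m Hm [h1 [h2 h3]]. apply (Hy (Z.of_nat k) m Hm). split; [|split].
    + rewrite Hyx. auto.
    + replace (Z.of_nat k + Z.of_nat m + 1)%Z with (Z.of_nat (k + m + 1)) by lia. rewrite Hyx. auto.
    + intros j Hj. replace (Z.of_nat k + Z.of_nat j)%Z with (Z.of_nat (k + j)) by lia.
      rewrite Hyx. auto.
  - intros Hx. exists (fun z => if (z <? 0)%Z then false else x (Z.to_nat z)). split.
    + intros k m Hm [h1 [h2 h3]].
      destruct (Z.ltb_spec k 0); [discriminate|].
      apply (Hx (Z.to_nat k) m Hm). split; [|split].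
      * auto.
      * destruct (Z.ltb_spec (k + Z.of_nat m + 1) 0); [lia|].
        rewrite <- h2. f_equal. lia.
      * intros j Hj. specialize (h3 j Hj). destruct (Z.ltb_spec (k + Z.of_nat j) 0); [lia|].
        rewrite <- h3. f_equal. lia.
    + intros n. destruct (Z.ltb_spec (Z.of_nat n) 0); [lia|]. rewrite Nat2Z.id. auto.
Qed.

Lemma valid_prev : forall p, valid p -> forall i, exists b, step b (p i).
Proof.
  intros p [[b0 H0] Hi] [|i]. { exists b0; auto. } exists (snd (p i)). auto.
Qed.

Lemma valid_OneS : forall p, valid p -> OneS (fun i => fst (p i)).
Proof.
  intros p Hv k m Hm [h1 [h2 h3]].
  destruct (valid_prev Hv k) as [b Hb]. unfold step in Hb. rewrite h1 in Hb. destruct Hb as [_ Hk].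
  assert (Z : forall j, (j <= m)%nat -> snd (p (k + j)%nat) = Nat.even j).
  { induction j; intros Hj. { rewrite Nat.add_0_r. auto. }
    pose proof (proj2 Hv (k + j)%nat) as St. unfold step in St.
    replace (S (k + j)) with (k + S j)%nat in St by lia.
    rewrite h3 in St by lia. simpl in St. rewrite IHj in St by lia.
    rewrite Nat.even_succ, <- Nat.negb_even, St. destruct (snd (p (k + S j)%nat)); auto. }
  pose proof (proj2 Hv (k + m)%nat) as St. unfold step in St.
  replace (S (k + m)) with (k + m + 1)%nat in St by lia. rewrite h2 in St.
  destruct St as [St _]. rewrite Z in St by lia.
  rewrite goodx, <- St, <- Nat.negb_even in Hm. destruct (Nat.even m); discriminate.
Qed.

Lemma min_ex : forall (P : nat -> Prop) n, P n -> exists k, P k /\ forall m, (m < k)%nat -> ~ P m.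
Proof.
  intros P n. induction n as [n IH] using lt_wf_ind. intros Hn.
  destruct (classic (exists m, (m < n)%nat /\ P m)) as [[m [Hm Pm]]|H].
  - apply (IH m Hm Pm).
  - exists n. split; auto. intros m Hm Pm. apply H. eauto.
Qed.

Fixpoint lst (x : nat -> bool) (i : nat) : nat :=
  match i with 0 => 0%nat | S i' => if x (S i') then S i' else lst x i' end.

Lemma lst_le : forall x i, (lst x i <= i)%nat.
Proof. intros x i. induction i; simpl; auto. destruct (x (S i)); lia. Qed.

Lemma cover_exists : forall x, OneS x -> exists s, valid (fun i => (x i, s i)).
Proof.
  intros x Hx.
  set (nxt := fun i => exists n, x (i + 1 + n)%nat = true).
  assert (minw : forall i, nxt i -> {n | x (i + 1 + n)%nat = true /\ forall n', (n' < n)%nat -> x (i + 1 + n')%nat = false}).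
  { intros i Hn. apply constructive_indefinite_description.
    destruct Hn as [n Hn]. destruct (min_ex (fun n => x (i + 1 + n)%nat = true) n Hn) as [k [Hk1 Hk2]].
    exists k. split; auto. intros n' Hn'. specialize (Hk2 n' Hn'). destruct (x (i + 1 + n')%nat); auto. congruence. }
  set (s := fun i => match excluded_middle_informative (nxt i) with
                     | left H => good (proj1_sig (minw i H))
                     | right _ => Nat.even (i - lst x i) end).
  assert (s_yes : forall i n, x (i + 1 + n)%nat = true -> (forall n', (n' < n)%nat -> x (i + 1 + n')%nat = false) -> s i = good n).
  { intros i n A B. unfold s. destruct (excluded_middle_informative (nxt i)) as [H|H].
    - destruct (minw i H) as [n0 [A0 B0]]. simpl.
      destruct (Nat.lt_trichotomy n0 n) as [L|[L|L]].
      + rewrite B in A0 by auto. discriminate.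
      + subst. auto.
      + rewrite B0 in A by auto. discriminate.
    - exfalso. apply H. exists n. auto. }
  assert (s_no : forall i, ~ nxt i -> s i = Nat.even (i - lst x i)).
  { intros i H. unfold s. destruct (excluded_middle_informative (nxt i)); [contradiction|auto]. }
  assert (getmin : forall i, nxt i -> exists n, x (i + 1 + n)%nat = true /\ forall n', (n' < n)%nat -> x (i + 1 + n')%nat = false).
  { intros i H. destruct (minw i H) as [n Hn]. eauto. }
  assert (after1 : forall i, x i = true -> s i = true).
  { intros i Hi. destruct (classic (nxt i)) as [H|H].
    - destruct (getmin i H) as [n [A B]]. rewrite (s_yes i n A B).
      destruct (good n) eqn:E; auto. exfalso. apply (Hx i n E). split; [|split]; auto.
      + replace (i + n + 1)%nat with (i + 1 + n)%nat by lia. auto.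
      + intros j Hj. replace (i + j)%nat with (i + 1 + (j - 1))%nat by lia. apply B. lia.
    - rewrite s_no by auto. destruct i; simpl. auto. rewrite Hi. rewrite Nat.sub_diag. auto. }
  exists s. split.
  - destruct (x 0%nat) eqn:E.
    + exists (good 0%nat). unfold step. simpl. split; auto.
    + exists (negb (s 0%nat)). unfold step. simpl. destruct (s 0%nat); auto.
  - intros i. unfold step. simpl. destruct (x (S i)) eqn:E.
    + split; auto. apply s_yes.
      * rewrite Nat.add_0_r, Nat.add_1_r. auto.
      * intros n' Hn'. lia.
    + destruct (classic (nxt (S i))) as [H|H].
      * destruct (getmin (S i) H) as [n [A B]]. rewrite (s_yes (S i) n A B).
        rewrite (s_yes i (S n)), Hg; auto.
        -- replace (i + 1 + S n)%nat with (S i + 1 + n)%nat by lia. auto.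
        -- intros n' Hn'. destruct n' as [|n'].
           ++ rewrite Nat.add_0_r, Nat.add_1_r. auto.
           ++ replace (i + 1 + S n')%nat with (S i + 1 + n')%nat by lia. apply B. lia.
      * assert (H' : ~ nxt i).
        { intros [n Hn]. destruct n as [|n].
          - rewrite Nat.add_0_r, Nat.add_1_r in Hn. congruence.
          - apply H. exists n. replace (S i + 1 + n)%nat with (i + 1 + S n)%nat by lia. auto. }
        rewrite (s_no i H'), (s_no (S i) H).
        assert (Ls : lst x (S i) = lst x i) by (simpl; rewrite E; auto). rewrite Ls.
        pose proof (lst_le x i).
        replace (S i - lst x i)%nat with (S (i - lst x i)) by lia.
        rewrite Nat.even_succ, <- Nat.negb_even, Bool.negb_involutive. auto.
Qed.

End W.

Fixpoint G (p : nat -> bool * bool) (n : nat) (h : bool) : bool * bool :=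
  match n with
  | 0 => if h then (false, negb (snd (p 0))) else
         if fst (p 0) then (true, true) else (false, negb (snd (p 0)))
  | S n' => if h || negb (fst (p 0)) then G (Defs.shift p) n' false else G p n' true
  end.
Definition Phi (p : nat -> bool * bool) : nat -> bool * bool := fun n => G p n false.

Fixpoint Hh (q : nat -> bool * bool) (n : nat) : bool * bool :=
  match n with
  | 0 => if fst (q 0) then (true, negb (snd (q 1))) else (false, negb (snd (q 0)))
  | S n' => if fst (q 0) then Hh (Defs.shift (Defs.shift q)) n' else Hh (Defs.shift q) n'
  end.
Definition Psi (q : nat -> bool * bool) : nat -> bool * bool := fun n => Hh q n.

Lemma Phi_shift_t : forall p, fst (p 0) = true -> Defs.shift (Defs.shift (Phi p)) = Phi (Defs.shift p).
Proof.
  intros p E. apply functional_extensionality. intros m. unfold Defs.shift, Phi. simpl. rewrite E. reflexivity.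
Qed.
Lemma Phi_shift_f : forall p, fst (p 0) = false -> Defs.shift (Phi p) = Phi (Defs.shift p).
Proof.
  intros p E. apply functional_extensionality. intros m. unfold Defs.shift, Phi. simpl. rewrite E. reflexivity.
Qed.
Lemma Psi_shift_f : forall q, fst (q 0) = false -> Defs.shift (Psi q) = Psi (Defs.shift q).
Proof.
  intros q E. apply functional_extensionality. intros m. unfold Defs.shift, Psi. simpl. rewrite E. reflexivity.
Qed.
Lemma Psi_shift_t : forall q, fst (q 0) = true -> Defs.shift (Psi q) = Psi (Defs.shift (Defs.shift q)).
Proof.
  intros q E. apply functional_extensionality. intros m. unfold Defs.shift, Psi. simpl. rewrite E. reflexivity.
Qed.

Lemma Phi0 : forall p, fst (Phi p 0) = fst (p 0).
Proof. intros p. unfold Phi. simpl. destruct (fst (p 0)); reflexivity. Qed.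
Lemma Psi0 : forall q, fst (Psi q 0) = fst (q 0).
Proof. intros q. unfold Psi. simpl. destruct (fst (q 0)); reflexivity. Qed.

Lemma C1 : forall n p, Psi (Phi p) n = p n.
Proof.
  induction n; intros p.
  - unfold Psi, Phi. simpl. destruct (p 0) as [a s] eqn:E. destruct a; simpl; rewrite ?E; simpl;
    rewrite negb_involutive; reflexivity.
  - unfold Psi. simpl. rewrite Phi0. destruct (fst (p 0)) eqn:E.
    + rewrite (Phi_shift_t p E). apply IHn.
    + rewrite (Phi_shift_f p E). apply IHn.
Qed.

Definition Iinv (q : nat -> bool * bool) : Prop :=
  forall i, fst (q i) = true -> snd (q i) = true /\ fst (q (S i)) = false.

Lemma C2 : forall n q, Iinv q -> Phi (Psi q) n = q n.
Proof.
  induction n as [n IH] using lt_wf_ind. intros q Hq.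
  destruct n as [|n].
  - unfold Phi, Psi. simpl. destruct (q 0) as [a s] eqn:E. destruct a; simpl.
    + destruct (Hq 0 ltac:(rewrite E; auto)) as [H1 _]. rewrite E in H1. simpl in H1. subst. auto.
    + rewrite negb_involutive. auto.
  - unfold Phi. cbn [G orb]. rewrite Psi0. destruct (fst (q 0)) eqn:E.
    + simpl. destruct (Hq 0 E) as [_ H1].
      destruct n as [|n].
      * simpl. unfold Psi. simpl. rewrite E. simpl. rewrite negb_involutive.
        destruct (q 1) as [a s] eqn:E1. simpl in H1. subst. auto.
      * simpl. rewrite (Psi_shift_t q E). apply (IH n). lia.
        intros i. apply (Hq (S (S i))).
    + simpl. rewrite (Psi_shift_f q E). apply (IH n). lia. intros i. apply (Hq (S i)).
Qed.

Lemma PhiS_f : forall p n, fst (p 0) = false -> Phi p (S n) = Phi (Defs.shift p) n.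
Proof. intros p n E. rewrite <- (Phi_shift_f p E). reflexivity. Qed.
Lemma PhiSS_t : forall p n, fst (p 0) = true -> Phi p (S (S n)) = Phi (Defs.shift p) n.
Proof. intros p n E. rewrite <- (Phi_shift_t p E). reflexivity. Qed.
Lemma Phi1_t : forall p, fst (p 0) = true -> Phi p 1 = (false, negb (snd (p 0))).
Proof. intros p E. unfold Phi. simpl. rewrite E. reflexivity. Qed.
Lemma Phi_0 : forall p, Phi p 0 = if fst (p 0) then (true, true) else (false, negb (snd (p 0))).
Proof. reflexivity. Qed.
Lemma PsiS_f : forall q n, fst (q 0) = false -> Psi q (S n) = Psi (Defs.shift q) n.
Proof. intros q n E. unfold Psi. simpl. rewrite E. reflexivity. Qed.
Lemma PsiS_t : forall q n, fst (q 0) = true -> Psi q (S n) = Psi (Defs.shift (Defs.shift q)) n.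
Proof. intros q n E. unfold Psi. simpl. rewrite E. reflexivity. Qed.
Lemma Psi_0 : forall q, Psi q 0 = if fst (q 0) then (true, negb (snd (q 1))) else (false, negb (snd (q 0))).
Proof. reflexivity. Qed.

Lemma valid_shift : forall g p, valid g p -> valid g (Defs.shift p).
Proof. intros g p [_ Hi]. split. { exists (snd (p 0)). apply Hi. } intros i. apply Hi. Qed.

Ltac stp := unfold step in *; simpl in *; change (Nat.odd 0) with false in *; change (Nat.even 0) with true in *.

Lemma C3aux : forall n p, valid Nat.even p -> step Nat.odd (snd (Phi p n)) (Phi p (S n)).
Proof.
  induction n as [n IH] using lt_wf_ind. intros p Hv.
  pose proof Hv as [[b0 H0] Hi].
  pose proof (Hi 0) as H1. pose proof (Hi 1) as H2.
  destruct (fst (p 0)) eqn:E.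
  - destruct n as [|[|m]].
    + rewrite Phi_0, Phi1_t, E by auto. destruct (p 0) as [a0 s0]. simpl in E. subst a0. stp.
      destruct H0 as [_ ->]. auto.
    + rewrite Phi1_t, PhiSS_t by auto. rewrite Phi_0. unfold Defs.shift.
      destruct (p 0) as [a0 s0]. destruct (p 1) as [a1 s1]. simpl in E. subst a0. stp.
      destruct H0 as [_ ->]. destruct a1; stp; intuition; subst; auto; destruct s1; simpl in *; congruence.
    + rewrite !PhiSS_t by auto. apply IH. lia. apply valid_shift. auto.
  - destruct n as [|m].
    + rewrite Phi_0, PhiS_f, Phi_0 by auto. rewrite E. unfold Defs.shift.
      destruct (p 0) as [a0 s0]. destruct (p 1) as [a1 s1]. simpl in E. subst a0. stp.
      destruct a1; stp; intuition; subst; auto.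
    + rewrite !PhiS_f by auto. apply IH. lia. apply valid_shift. auto.
Qed.

Lemma C3 : forall p, valid Nat.even p -> valid Nat.odd (Phi p).
Proof.
  intros p Hv. split.
  - rewrite Phi_0. destruct (p 0) as [a0 s0]. destruct a0; simpl.
    + exists false. stp. auto.
    + exists s0. stp. rewrite negb_involutive. auto.
  - intros i. apply C3aux. auto.
Qed.

Lemma valid_prev' : forall g p, valid g p -> forall i, exists b, step g b (p i).
Proof. intros g p [[b0 H0] Hi] [|i]. { exists b0; auto. } exists (snd (p i)). auto. Qed.

Lemma C5 : forall q, valid Nat.odd q -> Iinv q.
Proof.
  intros q Hv i Ei. destruct (valid_prev' Hv i) as [b Hb].
  pose proof (proj2 Hv i) as Hs. stp. rewrite Ei in Hb. destruct Hb as [_ Hb]. split; auto.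
  destruct (fst (q (S i))); auto. destruct Hs as [Hs _]. change (Nat.odd 0) with false in Hs. congruence.
Qed.

Lemma C4aux : forall n q, valid Nat.odd q -> step Nat.even (snd (Psi q n)) (Psi q (S n)).
Proof.
  induction n as [n IH] using lt_wf_ind. intros q Hv.
  pose proof Hv as [[b0 H0] Hi].
  pose proof (Hi 0) as H1. pose proof (Hi 1) as H2. pose proof (Hi 2) as H3.
  destruct (fst (q 0)) eqn:E.
  - destruct n as [|m].
    + rewrite PsiS_t, !Psi_0 by auto. rewrite E. unfold Defs.shift.
      destruct (q 0) as [a0 s0]. destruct (q 1) as [a1 s1]. destruct (q 2) as [a2 s2].
      destruct (q 3) as [a3 s3]. simpl in E. subst a0. stp.
      destruct a1, a2, a3, s0, s1, s2, s3, b0; simpl in *; intuition congruence.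
    + rewrite !PsiS_t by auto. apply IH. lia. apply valid_shift, valid_shift. auto.
  - destruct n as [|m].
    + rewrite PsiS_f, !Psi_0 by auto. rewrite E. unfold Defs.shift.
      destruct (q 0) as [a0 s0]. destruct (q 1) as [a1 s1]. destruct (q 2) as [a2 s2].
      simpl in E. subst a0. stp.
      destruct a1, a2, s0, s1, s2, b0; simpl in *; intuition congruence.
    + rewrite !PsiS_f by auto. apply IH. lia. apply valid_shift. auto.
Qed.

Lemma C4 : forall q, valid Nat.odd q -> valid Nat.even (Psi q).
Proof.
  intros q Hv. split.
  - pose proof Hv as [[b0 H0] Hi]. pose proof (Hi 0) as H1. rewrite Psi_0.
    destruct (q 0) as [a0 s0]. destruct (q 1) as [a1 s1]. destruct a0; simpl.
    + exists true. stp. destruct a1, s0, s1, b0; simpl in *; intuition congruence.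
    + exists s0. stp. rewrite negb_involutive. auto.
  - intros i. apply C4aux. auto.
Qed.

Lemma Gf : forall n p p' h, (forall i, fst (p i) = fst (p' i)) -> fst (G p n h) = fst (G p' n h).
Proof.
  induction n; intros p p' h E.
  - simpl. rewrite (E 0). destruct h; auto. destruct (fst (p' 0)); auto.
  - simpl. rewrite (E 0). destruct (h || negb (fst (p' 0))).
    + apply IHn. intros i. apply E.
    + apply IHn. auto.
Qed.

Lemma Hf : forall n q q', (forall i, fst (q i) = fst (q' i)) -> fst (Hh q n) = fst (Hh q' n).
Proof.
  induction n; intros q q' E.
  - simpl. rewrite (E 0). destruct (fst (q' 0)); auto.
  - simpl. rewrite (E 0). destruct (fst (q' 0)); apply IHn; intros i; apply E.
Qed.

Lemma Gdep : forall n p p' h, (forall i, i <= n -> p i = p' i) -> G p n h = G p' n h.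
Proof.
  induction n; intros p p' h E.
  - simpl. rewrite (E 0) by lia. auto.
  - simpl. rewrite (E 0) by lia. destruct (h || negb (fst (p' 0))).
    + apply IHn. intros i Hi. apply E. lia.
    + apply IHn. intros i Hi. apply E. lia.
Qed.

Lemma Hdep : forall n q q', (forall i, i <= 2 * n + 1 -> q i = q' i) -> Hh q n = Hh q' n.
Proof.
  induction n; intros q q' E.
  - simpl. rewrite (E 0), (E 1) by lia. auto.
  - simpl. rewrite (E 0) by lia. destruct (fst (q' 0)); apply IHn; intros i Hi; apply E; lia.
Qed.

Lemma shiftk_app : forall (A : Type) k (x : nat -> A) n, shiftk k x n = x (k + n).
Proof.
  induction k; intros x n; auto. simpl. unfold Defs.shift at 1.
  change (Nat.iter k (@Defs.shift A) x) with (shiftk k x). rewrite IHk. f_equal. lia.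
Qed.

Definition cl (N : nat) : list (nat * option nat) :=
  flat_map (fun i => [(i, @None nat); (i, Some 1)]) (seq 0 N).

Lemma dec_cont : forall g (x y : Lpoint bool) N,
  (forall d, In d (cl N) -> coordL y d = coordL x d) -> forall i, i < N -> dec g y i = dec g x i.
Proof.
  intros g x y N Hd i Hi.
  assert (I1 : In (i, @None nat) (cl N)).
  { unfold cl. apply in_flat_map. exists i. split. apply in_seq. lia. simpl. auto. }
  assert (I2 : In (i, Some 1) (cl N)).
  { unfold cl. apply in_flat_map. exists i. split. apply in_seq. lia. simpl. auto. }
  apply Hd in I1. apply Hd in I2. unfold coordL in I1, I2. simpl in I1, I2.
  injection I1 as I1. injection I2 as I2.
  unfold dec, dsb. rewrite I1, I2. reflexivity.
Qed.

Lemma Hge : forall m, Nat.even (S m) = negb (Nat.even m).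
Proof. intros m. rewrite Nat.even_succ, <- Nat.negb_even. reflexivity. Qed.
Lemma Hgo : forall m, Nat.odd (S m) = negb (Nat.odd m).
Proof. intros m. rewrite Nat.odd_succ, <- Nat.negb_even, negb_involutive. reflexivity. Qed.

Lemma even_eq : even_shift = LamG Nat.even.
Proof.
  apply functional_extensionality. intros y. apply propositional_extensionality. split.
  - intros H k m Hm Hp. destruct (Nat.Even_or_Odd m) as [Ev|[n ->]].
    + apply Nat.even_spec in Ev. congruence.
    + apply (H n). apply occurs_pat. exists k. exact Hp.
  - intros H n Ho. apply occurs_pat in Ho. destruct Ho as [k Hp]. apply (H k (2 * n + 1)); auto.
    rewrite Nat.add_1_r, Hge, Nat.even_mul. reflexivity.
Qed.

Lemma odd_eq : odd_shift = LamG Nat.odd.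
Proof.
  apply functional_extensionality. intros y. apply propositional_extensionality. split.
  - intros H k m Hm Hp. destruct (Nat.Even_or_Odd m) as [[n ->]|Od].
    + apply (H n). apply occurs_pat. exists k. exact Hp.
    + apply Nat.odd_spec in Od. congruence.
  - intros H n Ho. apply occurs_pat in Ho. destruct Ho as [k Hp]. apply (H k (2 * n)); auto.
    rewrite <- Nat.negb_even, Nat.even_mul. reflexivity.
Qed.

Theorem corollary6p9 : coe even_shift odd_shift.
Proof.
  rewrite even_eq, odd_eq.
  set (hL := fun x : Lpoint bool => emb Nat.odd (Phi (dec Nat.even x))).
  set (hLinv := fun y : Lpoint bool => emb Nat.even (Psi (dec Nat.odd y))).
  set (hLam := fun (x : nat -> bool) n => fst (Phi (fun i => (x i, false)) n)).
  set (hLaminv := fun (y : nat -> bool) n => fst (Psi (fun i => (y i, false)) n)).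
  assert (PP : forall p, Psi (Phi p) = p).
  { intros p. apply functional_extensionality. intros n. apply C1. }
  assert (QQ : forall q, valid Nat.odd q -> Phi (Psi q) = q).
  { intros q Hq. apply functional_extensionality. intros n. apply C2. apply C5. auto. }
  exists hL, hLinv, hLam, hLaminv, (fun _ => 0), (fun x : Lpoint bool => if fst (x 0) then 2 else 1),
    (fun y : Lpoint bool => if fst (y 0) then 1 else 0), (fun _ => 1).
  split; [|split; [|split; [|split; [|split; [|split; [|split; [|split]]]]]]].
  -
    split; [|split; [|split; [|split; [|split]]]].
    + intros x Hx. apply (valid_XL Hgo). apply C3. apply (XL_dec Hge Hx).
    + intros y Hy. apply (valid_XL Hge). apply C4. apply (XL_dec Hgo Hy).
    + intros x Hx. unfold hLinv, hL. rewrite (dec_emb _ Hgo), PP. symmetry. apply (XL_dec Hge Hx).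
    + intros y Hy. unfold hLinv, hL. rewrite (dec_emb _ Hge), QQ by apply (XL_dec Hgo Hy).
      symmetry. apply (XL_dec Hgo Hy).
    + intros x Hx [n o]. exists (cl (S n)). intros y Hy Hd.
      assert (E : hL y n = hL x n).
      { unfold hL, emb, Phi. rewrite (@Gdep n (dec Nat.even y) (dec Nat.even x) false); auto.
        intros i Hi. apply dec_cont with (N := S n); auto. lia. }
      unfold coordL. cbn [fst snd]. rewrite E. reflexivity.
    + intros y Hy [n o]. exists (cl (2 * n + 2)). intros z Hz Hd.
      assert (E : hLinv z n = hLinv y n).
      { unfold hLinv, emb, Psi. rewrite (@Hdep n (dec Nat.odd z) (dec Nat.odd y)); auto.
        intros i Hi. apply dec_cont with (N := 2 * n + 2); auto. lia. }
      unfold coordL. cbn [fst snd]. rewrite E. reflexivity.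
  -
    split; [|split; [|split; [|split; [|split]]]].
    + intros x Hx. apply XLam_iff in Hx. destruct (cover_exists Hge Hx) as [s Hv].
      apply XLam_iff. pose proof (valid_OneS Hgo (C3 Hv)) as O.
      replace (hLam x) with (fun i => fst (Phi (fun i0 => (x i0, s i0)) i)); auto.
      apply functional_extensionality. intros n. unfold hLam, Phi. apply Gf. reflexivity.
    + intros y Hy. apply XLam_iff in Hy. destruct (cover_exists Hgo Hy) as [s Hv].
      apply XLam_iff. pose proof (valid_OneS Hge (C4 Hv)) as O.
      replace (hLaminv y) with (fun i => fst (Psi (fun i0 => (y i0, s i0)) i)); auto.
      apply functional_extensionality. intros n. unfold hLaminv, Psi. apply Hf. reflexivity.
    + intros x _. apply functional_extensionality. intros n. unfold hLaminv.
      transitivity (fst (Psi (Phi (fun i => (x i, false))) n)).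
      * unfold Psi. apply Hf. reflexivity.
      * rewrite PP. reflexivity.
    + intros y Hy. apply XLam_iff in Hy. destruct (cover_exists Hgo Hy) as [s Hv].
      apply functional_extensionality. intros n. unfold hLam.
      transitivity (fst (Phi (Psi (fun i => (y i, s i))) n)).
      * unfold Phi. apply Gf. intros i. simpl. unfold hLaminv, Psi. apply Hf. reflexivity.
      * rewrite QQ by auto. reflexivity.
    + intros x Hx n. exists (seq 0 (S n)). intros y Hy Hd. unfold coordLam, hLam, Phi.
      f_equal. apply Gdep. intros i Hi. rewrite Hd; auto. apply in_seq. lia.
    + intros x Hx n. exists (seq 0 (2 * n + 2)). intros y Hy Hd. unfold coordLam, hLaminv, Psi.
      f_equal. apply Hdep. intros i Hi. rewrite Hd; auto. apply in_seq. lia.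
  - intros x Hx c. exists []. intros. reflexivity.
  - intros x Hx c. exists [(0, @None nat)]. intros y Hy Hd.
    specialize (Hd (0, None) (or_introl eq_refl)). unfold coordL in Hd. simpl in Hd.
    injection Hd as Hd. unfold coordNat. rewrite Hd. reflexivity.
  - intros x Hx c. exists [(0, @None nat)]. intros y Hy Hd.
    specialize (Hd (0, None) (or_introl eq_refl)). unfold coordL in Hd. simpl in Hd.
    injection Hd as Hd. unfold coordNat. rewrite Hd. reflexivity.
  - intros x Hx c. exists []. intros. reflexivity.
  - intros x Hx. apply functional_extensionality. intros n. unfold piL, hL, hLam, emb, Phi. simpl.
    apply Gf. reflexivity.
  - intros x Hx. apply functional_extensionality. intros n. rewrite !shiftk_app.
    unfold hL, emb. simpl.
    assert (Ed : dec Nat.even (Defs.shift x) = Defs.shift (dec Nat.even x)) by reflexivity.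
    rewrite Ed. destruct (fst (x 0)) eqn:E.
    + rewrite <- (PhiSS_t (dec Nat.even x) n E). reflexivity.
    + rewrite <- (PhiS_f (dec Nat.even x) n E). reflexivity.
  - intros y Hy. apply functional_extensionality. intros n. rewrite !shiftk_app.
    unfold hLinv, emb. simpl.
    assert (Ed : dec Nat.odd (Defs.shift y) = Defs.shift (dec Nat.odd y)) by reflexivity.
    rewrite Ed. pose proof (C5 (proj2 (XL_dec Hgo Hy))) as Hq.
    destruct (fst (y 0)) eqn:E.
    + destruct (Hq 0 E) as [_ H1].
      change (1 + n) with (S n).
      rewrite (PsiS_f (Defs.shift (dec Nat.odd y)) n H1). reflexivity.
    + reflexivity.
Qed.
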